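(* Consider an instance of the submodular partition problem (notation in context) with $m\ge 2$ users, and let $G=\{(u_1,r_1),\dots,(u_n,r_n)\}$ be the output of the GREEDY-M algorithm, where $(u_i,r_i)$ is the pair chosen at iteration $i$, $d_i^p$ the discriminant at iteration $i$ and $c_{u_i}$ the curvature of $Z_{u_i}$. Let $\Omega$ be an optimal partition and assume $Z(\Omega)>0$. Then $$\frac{Z(G)}{Z(\Omega)}\ \ge\ \min\left(1,\ \frac{1}{\max_{1\le i\le n}\left\{c_{u_i}+\frac{1}{d_i^p}\right\}}\right),$$ with the conventions $1/\infty=0$, $1/0=\infty$.
   Context: Submodular partition problem: a finite set of resources $\mathcal{R}$ with $|\mathcal{R}|=n$ and a finite set of users $\mathcal{U}$ with $|\mathcal{U}|=m$; each user $u$ has a monotone submodular $Z_u:2^{\mathcal{R}}\to\mathbb{R}$ with $Z_u(\emptyset)=0$ (monotone: $Z_u(S)\le Z_u(T)$ for $S\subseteq T$; submodular: $Z_u(T\cup\{x\})-Z_u(T)\le Z_u(S\cup\{x\})-Z_u(S)$ for $S\subseteq T$, $x\notin T$). Let $\mathcal{V}=\mathcal{U}\times\mathcal{R}$; for $S\subseteq\mathcal{V}$ let $S_u=\{r:(u,r)\in S\}$ and $Z(S)=\sum_{u\in\mathcal{U}}Z_u(S_u)$. An allocation is $S\subseteq \mathcal{V}$ in which each resource appears in at most one pair; a partition is an allocation in which every resource appears in exactly one pair. $\Omega$ is a partition maximizing $Z$. For $S\subseteq\mathcal{V}$, $\rho^u_r(S)=Z_u(S_u\cup\{r\})-Z_u(S_u)$.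 The curvature of $Z_u$ is $c_u=1-\min\{(Z_u(S\cup\{r\})-Z_u(S))/Z_u(\{r\}): S\subseteq\mathcal{R},\ r\in\mathcal{R}\setminus S,\ Z_u(\{r\})>0\}$. GREEDY-M algorithm: $G^0=\emptyset$; for $i=1,\dots,n$, among pairs $(u,r)$ with $r$ not allocated in $G^{i-1}$, select a pair maximizing $\rho^u_r(G^{i-1})$; if several pairs attain the maximum, select among them one minimizing $c_u+1/d_i(u,r)$, where $d_i(u,r)=\rho^u_r(G^{i-1})/\max_{u'\neq u}\rho^{u'}_r(G^{i-1})$ (set to $\infty$ if the denominator is $0$); remaining ties are broken by a fixed index order of pairs. Call the selected pair $(u_i,r_i)$ and set $G^i=G^{i-1}\cup\{(u_i,r_i)\}$; output $G=G^n$. The discriminant at iteration $i$ is $d_i^p=d_i(u_i,r_i)$. *)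

(* Defs.v *)
From HB Require Import structures.
From mathcomp Require Import all_boot all_order all_algebra.
Set Implicit Arguments. Unset Strict Implicit. Unset Printing Implicit Defensive.
Import Order.TTheory GRing.Theory Num.Theory.
Local Open Scope ring_scope.

Section SubmodPartition.
Variables (R : realFieldType) (U Res : finType).
Variable Z : U -> {set Res} -> R.

Definition monotone_fun : Prop :=
  forall u (S T : {set Res}), S \subset T -> Z u S <= Z u T.

Definition submodular_fun : Prop :=
  forall u (S T : {set Res}) (x : Res), S \subset T -> x \notin T ->
    Z u (x |: T) - Z u T <= Z u (x |: S) - Z u S.

Definition normalized_fun : Prop := forall u, Z u set0 = 0.

Definition Su (S : {set U * Res}) (u : U) : {set Res} := [set r | (u, r) \in S].

Definition ZZ (S : {set U * Res}) : R := \sum_(u : U) Z u (Su S u).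

Definition is_partition (S : {set U * Res}) : Prop :=
  forall r : Res, #|[set u | (u, r) \in S]| = 1%N.

Definition rho (S : {set U * Res}) (u : U) (r : Res) : R :=
  Z u (r |: Su S u) - Z u (Su S u).

Definition allocated (S : {set U * Res}) (r : Res) : bool :=
  [exists u, (u, r) \in S].

(* The min is taken with neutral element 1, which does not change its value
   because the term S = set0 equals 1 (Z u set0 = 0).
   Convention when the index set is empty (Z_u({r}) = 0 for all r): c_u = 1. *)
Definition curvature (u : U) : R :=
  if [exists r, 0 < Z u [set r]] then
    1 - \big[Num.min/1]_(S : {set Res})
          \big[Num.min/1]_(r : Res | (r \notin S) && (0 < Z u [set r]))
             ((Z u (r |: S) - Z u S) / Z u [set r])
  else 1.

(* Extended nonnegative values: Some x = x, None = +infinity. *)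
Definition ele (a b : option R) : bool :=
  match a, b with
  | _, None => true
  | None, Some _ => false
  | Some x, Some y => x <= y
  end.

Definition emax (a b : option R) : option R := if ele a b then b else a.

(* 1 / d(u,r) where d(u,r) = rho^u_r / max_{u' <> u} rho^{u'}_r,
   d = infinity if the denominator is 0, with 1/infinity = 0 and 1/0 = infinity.
   (The max is over a nonempty set when #|U| >= 2; all the rho are >= 0 by
   monotonicity, so taking the max with neutral element 0 is harmless.) *)
Definition inv_d (S : {set U * Res}) (u : U) (r : Res) : option R :=
  let den := \big[Num.max/0]_(u' : U | u' != u) rho S u' r in
  if den == 0 then Some 0
  else if rho S u r == 0 then None
  else Some (den / rho S u r).

Definition key (S : {set U * Res}) (p : U * Res) : option R :=
  match inv_d S p.1 p.2 with
  | Some x => Some (curvature p.1 + x)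
  | None => None
  end.

Definition prefix (s : seq (U * Res)) (i : nat) : {set U * Res} :=
  [set x in take i s].

(* s = (s_0,...,s_{n-1}), n = #|Res|, is the run of GREEDY-M (with the fixed index order of pairs given by the
   injective ranking idx): at every iteration i (0-based), the pair s_i is
   selected according to the three rules of the algorithm. *)
Definition greedyM_run (idx : U * Res -> nat) (s : #|Res|.-tuple (U * Res)) : Prop :=
  forall i : 'I_#|Res|,
    let G := prefix s i in
    let p := tnth s i in
    [/\ ~~ allocated G p.2,
        (forall q : U * Res, ~~ allocated G q.2 -> rho G q.1 q.2 <= rho G p.1 p.2),
        (forall q : U * Res, ~~ allocated G q.2 -> rho G q.1 q.2 = rho G p.1 p.2 ->
            ele (key G p) (key G q)) &
        (forall q : U * Res, ~~ allocated G q.2 -> rho G q.1 q.2 = rho G p.1 p.2 ->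
            key G q = key G p -> (idx p <= idx q)%N)].

(* max_i { c_{u_i} + 1/d_i^p } over the iterations (values are >= 0) *)
Definition max_key (s : #|Res|.-tuple (U * Res)) : option R :=
  \big[emax/Some 0]_(i < #|Res|) key (prefix s i) (tnth s i).

(* min(1, 1/M) with 1/infinity = 0 and 1/0 = infinity *)
Definition greedy_bound (M : option R) : R :=
  match M with
  | None => 0
  | Some k => if k == 0 then 1 else Num.min 1 k^-1
  end.

End SubmodPartition.

(* Main.v *)
Require Import Defs.
From HB Require Import structures.
From mathcomp Require Import all_boot all_order all_algebra.
From mathcomp Require Import ring lra.
Require Import Defs.
Import Order.TTheory GRing.Theory Num.Theory.
Local Open Scope ring_scope.
Set Implicit Arguments. Unset Strict Implicit.
Section Basic.
Variables (R : realFieldType) (U Res : finType) (Z : U -> {set Res} -> R).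
Hypotheses (hmono : monotone_fun Z) (hsub : submodular_fun Z) (hnorm : normalized_fun Z).

Lemma Z_ge0 u S : 0 <= Z u S.
Proof. by rewrite -(hnorm u); apply: hmono; exact: sub0set. Qed.

Lemma marg_ge0 u S r : 0 <= Z u (r |: S) - Z u S.
Proof. by rewrite subr_ge0; apply: hmono; exact: subsetUr. Qed.

Lemma rho_ge0 S u r : 0 <= rho Z S u r.
Proof. exact: marg_ge0. Qed.

Lemma rho_le_single S u r : rho Z S u r <= Z u [set r].
Proof.
rewrite /rho; case: (boolP (r \in Su S u)) => h.
  by rewrite (setUidPr _) ?sub1set // subrr Z_ge0.
have := hsub u (sub0set (Su S u)) h.
by rewrite setU0 hnorm subr0.
Qed.

Lemma curv_le1 u : curvature Z u <= 1.
Proof.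
rewrite /curvature; case: ifP => // _.
rewrite lerBlDr lerDl.
apply: le_bigmin => // S _; apply: le_bigmin => // r /andP [_ hr].
by apply: divr_ge0; [exact: marg_ge0 | exact: ltW].
Qed.

Lemma curv_marg u (T : {set Res}) r : r \notin T ->
  (1 - curvature Z u) * Z u [set r] <= Z u (r |: T) - Z u T.
Proof.
move=> hrT; case: (ltrP 0 (Z u [set r])) => h; last first.
  have -> : Z u [set r] = 0 by apply/eqP; rewrite eq_le h Z_ge0.
  by rewrite mulr0 marg_ge0.
rewrite /curvature.
have -> : [exists r, 0 < Z u [set r]] by apply/existsP; exists r.
set m := \big[Num.min/1]_(S : {set Res}) _.
have -> : 1 - (1 - m) = m by ring.
rewrite -ler_pdivlMr //.
apply: le_trans (bigmin_le _ T _) _.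
by apply: (bigmin_le_cond _ (j := r)); rewrite hrT h.
Qed.

End Basic.

Section Greedy.
Variables (R : realFieldType) (U Res : finType) (Z : U -> {set Res} -> R).
Variables (idx : U * Res -> nat) (s : #|Res|.-tuple (U * Res)).
Hypothesis hrun : greedyM_run Z idx s.

Local Notation n := #|Res|.

Lemma prefix0 : prefix s 0%N = set0.
Proof. by apply/setP => x; rewrite !inE take0. Qed.

Lemma prefixn : prefix s n = [set x in s].
Proof. by rewrite /prefix take_oversize // size_tuple. Qed.

Lemma prefixS (i : 'I_n) : prefix s i.+1 = tnth s i |: prefix s i.
Proof.
apply/setP => x; rewrite /prefix (take_nth (tnth s i)) ?size_tuple //.
by rewrite !inE mem_rcons in_cons -tnth_nth.
Qed.

Lemma alloc_setU1 p (A : {set U * Res}) r :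
  allocated (p |: A) r = (r == p.2) || allocated A r.
Proof.
apply/existsP/orP => [[u]|].
  rewrite !inE => /orP [/eqP <- | h]; [by left | by right; apply/existsP; exists u].
case=> [/eqP -> | /existsP [u hu]]; first by exists p.1; rewrite -surjective_pairing setU11.
by exists u; rewrite inE hu orbT.
Qed.

Lemma alloc0 (r : Res) : allocated (set0 : {set U * Res}) r = false.
Proof. by apply/existsP => [[u]]; rewrite inE. Qed.

Lemma mem_prefix (j : 'I_n) k : (j < k)%N -> tnth s j \in prefix s k.
Proof.
move=> hjk; rewrite inE (tnth_nth (tnth s j)) -(nth_take _ hjk).
apply: mem_nth; rewrite size_take size_tuple.
case: ifP => // /negbT; rewrite -leqNgt => h; exact: ltn_ord.
Qed.

Lemma r_inj : injective (fun i : 'I_n => (tnth s i).2).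
Proof.
have H : forall i j : 'I_n, (j < i)%N -> (tnth s i).2 != (tnth s j).2.
  move=> i j hji; have [h _ _ _] := hrun i.
  apply: contraNneq h => ->; apply/existsP; exists (tnth s j).1.
  by rewrite -surjective_pairing mem_prefix.
move=> i j /= e; case: (ltngtP i j) => h.
- by move: (H _ _ h); rewrite e eqxx.
- by move: (H _ _ h); rewrite e eqxx.
- exact: val_inj.
Qed.

Lemma all_alloc r : allocated (prefix s n) r.
Proof.
have := inj_card_onto r_inj; rewrite card_ord => /(_ (leqnn _) r) /codomP [i ->].
apply/existsP; exists (tnth s i).1; rewrite -surjective_pairing mem_prefix //.
Qed.


Hypotheses (hmono : monotone_fun Z) (hsub : submodular_fun Z) (hnorm : normalized_fun Z).

Lemma invd_some (A : {set U * Res}) a r :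
  (forall q : U * Res, ~~ allocated A q.2 -> rho Z A q.1 q.2 <= rho Z A a r) ->
  ~~ allocated A r ->
  exists x, inv_d Z A a r = Some x /\
    \big[Num.max/0]_(u' : U | u' != a) rho Z A u' r <= x * rho Z A a r.
Proof.
move=> hmax hfree; rewrite /inv_d.
set den := \big[Num.max/0]_(u' : U | u' != a) rho Z A u' r.
have hden : den <= rho Z A a r.
  apply: bigmax_le; first exact: rho_ge0.
  by move=> u _; exact: (hmax (u, r)).
have hden0 : 0 <= den.
  rewrite /den; elim/big_ind: _ => // [x y hx hy|u _]; last exact: rho_ge0.
  by rewrite le_max hx.
case: eqP => [->|hd0]; first by exists 0; rewrite mul0r.
case: eqP => [hr0|hr0].
  by exfalso; apply: hd0; apply/eqP; rewrite eq_le hden0 -hr0 hden.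
exists (den / rho Z A a r); split => //.
by rewrite divfK //; apply/eqP.
Qed.

Variable Omega : {set U * Res}.
Hypothesis hOpart : is_partition Omega.

Definition O k : {set U * Res} :=
  [set x | (x \in prefix s k) || ((x \in Omega) && ~~ allocated (prefix s k) x.2)].

Lemma step (i : 'I_n) (M : R) : 1 <= M ->
  (forall x, inv_d Z (prefix s i) (tnth s i).1 (tnth s i).2 = Some x ->
     curvature Z (tnth s i).1 + x <= M) ->
  ZZ Z (O i) - (M - 1) * rho Z (prefix s i) (tnth s i).1 (tnth s i).2
    <= ZZ Z (O i.+1).
Proof.
move=> hM hK.
have [hfree hmax _ _] := hrun i.
rewrite /O prefixS.
move: (prefix s i) (tnth s i) hfree hmax hK => A [a r] /= hfree hmax hK.
have [x [hx hdx]] := invd_some hmax hfree.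
have {}hK := hK x hx.
have [w hw] : exists w, forall u, ((u, r) \in Omega) = (u == w).
  have := hOpart r; move/eqP/cards1P => [w hw']; exists w => u.
  by rewrite -in_set1 -hw' inE.
have hA : forall u, (u, r) \notin A.
  move=> u; apply/negP => h; apply: (negP hfree); apply/existsP; exists u.
  exact: h.
have hrho := rho_ge0 hmono A a r.
case: (eqVneq w a) => [ew | nwa].
  set O0 := [set x | _ || ((x \in Omega) && ~~ allocated A x.2)].
  have -> : [set x0 | (x0 \in (a, r) |: A)
      || ((x0 \in Omega) && ~~ allocated ((a, r) |: A) x0.2)] = O0.
    apply/setP => [[u r']]; rewrite !inE alloc_setU1 /=.
    case: (eqVneq r' r) => [->|nr].
      by rewrite xpair_eqE eqxx andbT hw ew (negbTE (hA u)) (negbTE hfree) /= andbF; case: (u == a).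
    by rewrite xpair_eqE (negbTE nr) andbF.
  rewrite lerBlDr lerDl; apply: mulr_ge0 => //; by rewrite subr_ge0.
set O0 := [set x | _ || ((x \in Omega) && ~~ allocated A x.2)].
set O1 := [set x0 | (x0 \in (a, r) |: A)
      || ((x0 \in Omega) && ~~ allocated ((a, r) |: A) x0.2)].
have hSu : forall (S : {set U * Res}) u r', (r' \in Su S u) = ((u, r') \in S).
  by move=> S u r'; rewrite inE.
have F1 : Su O1 a = r |: Su O0 a.
  apply/setP => r'; rewrite in_setU1 !hSu !inE alloc_setU1 /=.
  case: (eqVneq r' r) => [->|nr]; first by rewrite xpair_eqE !eqxx.
  by rewrite xpair_eqE (negbTE nr) andbF.
have F2 : r \notin Su O0 a.
  by rewrite hSu inE (negbTE (hA a)) hw eq_sym (negbTE nwa).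
have F3 : Su O0 w = r |: Su O1 w.
  apply/setP => r'; rewrite in_setU1 !hSu !inE alloc_setU1 /=.
  case: (eqVneq r' r) => [->|nr].
    by rewrite (negbTE (hA w)) hw eqxx (negbTE hfree).
  by rewrite xpair_eqE (negbTE nr) andbF.
have F4 : r \notin Su O1 w.
  by rewrite hSu !inE alloc_setU1 /= eqxx xpair_eqE (negbTE nwa) (negbTE (hA w)) andbF.
have F5 : Su A w \subset Su O1 w.
  by apply/subsetP => r'; rewrite !hSu !inE => ->; rewrite orbT.
have F6 : forall u, u != a -> u != w -> Su O1 u = Su O0 u.
  move=> u ua uw; apply/setP => r'; rewrite !hSu !inE alloc_setU1 /=.
  case: (eqVneq r' r) => [->|nr].
    by rewrite xpair_eqE (negbTE ua) hw (negbTE uw) (negbTE (hA u)).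
  by rewrite xpair_eqE (negbTE nr) andbF.
have hc1 := curv_le1 hmono a.
have gain : (1 - curvature Z a) * rho Z A a r <= Z a (Su O1 a) - Z a (Su O0 a).
  rewrite F1; apply: le_trans (curv_marg hmono hnorm _ F2).
  by apply: ler_wpM2l; [rewrite subr_ge0 | exact: rho_le_single].
have loss : - (x * rho Z A a r) <= Z w (Su O1 w) - Z w (Su O0 w).
  rewrite F3; have h1 := @hsub w _ _ r F5 F4.
  have h2 : rho Z A w r <= \big[Num.max/0]_(u' | u' != a) rho Z A u' r.
    exact: (le_bigmax_cond _ (j := w)).
  rewrite /rho in h2; lra.
pose g u := if u == a then (1 - curvature Z a) * rho Z A a r
            else if u == w then - (x * rho Z A a r) else 0.
have hg : \sum_u g u <= \sum_u (Z u (Su O1 u) - Z u (Su O0 u)).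
  apply: ler_sum => u _; rewrite /g.
  case: (eqVneq u a) => [->|ua] //; case: (eqVneq u w) => [->|uw] //.
  by rewrite F6 // subrr.
have hsum : \sum_u g u = (1 - curvature Z a) * rho Z A a r - x * rho Z A a r.
  rewrite (bigD1 a) //= (bigD1 w) //= big1 => [|u /andP [ua uw]].
    by rewrite /g eqxx (negbTE nwa) eqxx addr0.
  by rewrite /g (negbTE ua) (negbTE uw).
rewrite hsum sumrB in hg; rewrite /ZZ; nra.
Qed.


Lemma ZZ0 : ZZ Z set0 = 0.
Proof.
rewrite /ZZ big1 // => u _.
have -> : Su (set0 : {set U * Res}) u = set0 by apply/setP => r; rewrite !inE.
exact: hnorm.
Qed.

Lemma O0E : O 0%N = Omega.
Proof. apply/setP => x; by rewrite /O inE prefix0 alloc0 inE /= andbT. Qed.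

Lemma OnE : O n = [set x in s].
Proof. by apply/setP => x; rewrite /O inE all_alloc andbF orbF prefixn. Qed.

Lemma ZZS (i : 'I_n) : ZZ Z (prefix s i.+1) =
  ZZ Z (prefix s i) + rho Z (prefix s i) (tnth s i).1 (tnth s i).2.
Proof.
rewrite prefixS; move: (prefix s i) (tnth s i) => A [a r] /=.
rewrite /ZZ (bigD1 a) //= [in RHS](bigD1 a) //=.
have -> : Su ((a, r) |: A) a = r |: Su A a.
  by apply/setP => r'; rewrite !inE xpair_eqE eqxx.
rewrite (eq_bigr (fun u => Z u (Su A u))) => [|u ua].
  rewrite /rho; lra.
congr (Z u _); apply/setP => r'; rewrite !inE xpair_eqE (negbTE ua) //.
Qed.

Lemma main_ineq (M : R) : 1 <= M ->
  (forall (i : 'I_n) x, inv_d Z (prefix s i) (tnth s i).1 (tnth s i).2 = Some x ->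
     curvature Z (tnth s i).1 + x <= M) ->
  ZZ Z Omega <= M * ZZ Z [set x in s].
Proof.
move=> hM hK.
suff H : forall k, (k <= n)%N ->
    ZZ Z Omega <= ZZ Z (O k) + (M - 1) * ZZ Z (prefix s k).
  have := H n (leqnn n); rewrite OnE prefixn.
  have -> : M * ZZ Z [set x in s] = ZZ Z [set x in s] + (M - 1) * ZZ Z [set x in s]
    by ring.
  done.
elim => [_|k IH hk]; first by rewrite O0E prefix0 ZZ0 mulr0 addr0.
have := @step (Ordinal hk) M hM (hK _); have := ZZS (Ordinal hk).
have := IH (ltnW hk); rewrite /=; nra.
Qed.

End Greedy.

Unset Implicit Arguments. Set Strict Implicit.
Theorem theorem4 (R : realFieldType) (U Res : finType)
    (Z : U -> {set Res} -> R)
    (hmono : monotone_fun Z) (hsub : submodular_fun Z) (hnorm : normalized_fun Z)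
    (hm : (1 < #|U|)%N)
    (idx : U * Res -> nat) (hidx : injective idx)
    (s : #|Res|.-tuple (U * Res)) (hrun : greedyM_run Z idx s)
    (Omega : {set U * Res}) (hOpart : is_partition Omega)
    (hOopt : forall P : {set U * Res}, is_partition P -> ZZ Z P <= ZZ Z Omega)
    (hpos : 0 < ZZ Z Omega) :
  greedy_bound (max_key Z s) <= ZZ Z [set x in s] / ZZ Z Omega.
Proof.
pose kv (i : 'I_#|Res|) := odflt 0 (key Z (prefix s i) (tnth s i)).
have hkey : forall (i : 'I_#|Res|) (x : R), inv_d Z (prefix s i) (tnth s i).1 (tnth s i).2 = Some x ->
    key Z (prefix s i) (tnth s i) = Some (curvature Z (tnth s i).1 + x).
  by move=> i x hx; rewrite /key hx.
have hkv : forall i : 'I_#|Res|, key Z (prefix s i) (tnth s i) = Some (kv i).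
  move=> i; have [hfree hmax _ _] := hrun i.
  have [x [hx _]] := invd_some hmono hmax hfree.
  by rewrite /kv (hkey _ _ hx).
set K := \big[Num.max/0]_(i < #|Res|) kv i.
have hmk : max_key Z s = Some K.
  rewrite /max_key /K; apply: (big_ind2 (fun a b => a = Some b)) => //.
    move=> a1 b1 a2 b2 -> ->; rewrite /emax /=.
    by case: leP.
have hK0 : 0 <= K.
  rewrite /K; elim/big_rec: _ => // i y _ hy; by rewrite le_max hy orbT.
set M := Num.max K 1.
have hM1 : 1 <= M by rewrite le_max lexx orbT.
have hKM : K <= M by rewrite le_max lexx.
have hmain := main_ineq hrun hmono hsub hnorm hOpart hM1.
have {hmain} hmain : ZZ Z Omega <= M * ZZ Z [set x in s].
  apply: hmain => i x hx.
  have := hkv i; rewrite (hkey _ _ hx) => -[->].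
  apply: le_trans hKM; exact: (le_bigmax _ _ i).
rewrite hmk /greedy_bound.
case: eqP => [K0|K0].
  rewrite ler_pdivlMr // mul1r.
  by move: hmain; rewrite /M K0 max_r ?ler01 // mul1r.
case: (leP K 1) => hK1.
  rewrite ge_min; apply/orP; left.
  rewrite ler_pdivlMr // mul1r.
  by move: hmain; rewrite /M max_r // mul1r.
rewrite ge_min; apply/orP; right.
have hKp : 0 < K := lt_trans ltr01 hK1.
rewrite ler_pdivlMr // mulrC ler_pdivrMr // mulrC.
by move: hmain; rewrite /M max_l // ltW.
Qed.
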